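(* Let $F_n:[0,+\infty)\to\mathcal L(X,X)$, $n\ge1$, be continuous functions such that $\|F_n(t)\|_{\mathcal L(X,X)}\le R_F$ for all $t\ge0$, $n\ge1$ and some $R_F>0$, and such that for every $T>0$, $\int_0^tF_n(r)\,dr\to0$ in $\mathcal L(X,X)$ as $n\to+\infty$, uniformly with respect to $t\in[0,T]$. Then for every $T>0$, $$\lim_{n\to+\infty}\int_s^tF_n(r)S_0(r-s)\bar u\,dr=0\quad\text{in }X,$$ uniformly with respect to $\bar u$ in bounded subsets of $X$, $t\in[0,T]$ and $s\in[0,t]$.
   Context: $X$ is a Banach space. $A_0$ is a linear operator in $X$ such that $-A_0$ generates an analytic $C_0$-semigroup $\{S_0(t)\}_{t\ge0}$ on $X$ satisfying $\|S_0(t)\|_{\mathcal L(X,X)}\le M_0$ for $t\ge0$ and $\|A_0S_0(t)\|_{\mathcal L(X,X)}\le M_1t^{-1}$ for $t>0$, for some constants $M_0,M_1>0$. *)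

(* Defs.v *)
From Stdlib Require Import Reals.
From Coquelicot Require Import Coquelicot.
Open Scope R_scope.

Section Ops.
Context {X : CompleteNormedModule R_AbsRing}.

Definition is_linear_op (A : X -> X) : Prop :=
  (forall x y, A (plus x y) = plus (A x) (A y)) /\
  (forall (a : R) x, A (scal a x) = scal a (A x)).

Definition op_norm_le (A : X -> X) (c : R) : Prop :=
  forall x, norm (A x) <= c * norm x.

Definition is_bounded_op (A : X -> X) : Prop :=
  is_linear_op A /\ exists c, op_norm_le A c.

Definition C0_semigroup (S : R -> X -> X) : Prop :=
  (forall t, 0 <= t -> is_bounded_op (S t)) /\
  (forall x, S 0 x = x) /\
  (forall t s x, 0 <= t -> 0 <= s -> S (t + s) x = S t (S s x)) /\
  (forall x, filterlim (fun t => S t x) (at_right 0) (locally x)).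

Definition is_generator (S : R -> X -> X) (G : X -> X) (D : X -> Prop) : Prop :=
  (forall x, D x <-> exists y,
     filterlim (fun h => scal (/ h) (minus (S h x) x)) (at_right 0) (locally y)) /\
  (forall x, D x ->
     filterlim (fun h => scal (/ h) (minus (S h x) x)) (at_right 0) (locally (G x))).

Definition op_continuous_on_halfline (F : R -> X -> X) : Prop :=
  forall t, 0 <= t -> forall eps, 0 < eps -> exists delta, 0 < delta /\
    forall r, 0 <= r -> Rabs (r - t) < delta ->
      op_norm_le (fun x => minus (F r x) (F t x)) eps.

End Ops.

(* Main.v *)
Require Import Defs.
From Stdlib Require Import Reals Lra Classical.
From Coquelicot Require Import Coquelicot.
Open Scope R_scope.


Section Gen.
Context {X : CompleteNormedModule R_AbsRing}.

Lemma nt3 (a b c : X) : norm (minus a c) <= norm (minus a b) + norm (minus b c).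
Proof. rewrite (minus_trans b). exact (norm_triangle _ _). Qed.

Lemma nsym (a b : X) : norm (minus a b) = norm (minus b a).
Proof. rewrite <- opp_minus. exact (norm_opp _). Qed.

Lemma lin_opp (A : X -> X) : is_linear_op A -> forall x, A (opp x) = opp (A x).
Proof. intros [_ H] x.
  transitivity (A (scal (opp (one : R_AbsRing)) x)).
  { f_equal. symmetry. exact (scal_opp_one x). }
  rewrite H. exact (scal_opp_one (A x)). Qed.

Lemma lin_minus (A : X -> X) : is_linear_op A -> forall x y, A (minus x y) = minus (A x) (A y).
Proof. intros HA x y. unfold minus. rewrite (proj1 HA). now rewrite lin_opp. Qed.

Lemma nmm (a : X) : norm (minus a a) = 0.
Proof. rewrite minus_eq_zero. exact norm_zero. Qed.

Lemma ball_R (z y : R) (e : R) : ball z e y -> Rabs (y - z) < e.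
Proof. intro H. exact H. Qed.

Lemma R_ball (z y : R) (e : R) : Rabs (y - z) < e -> ball z e y.
Proof. intro H. exact H. Qed.

Lemma ex_RInt_within (f : R -> X) (a b : R) : a <= b ->
  (forall z, a <= z <= b -> forall e, 0 < e -> exists g, 0 < g /\
     forall r, a <= r <= b -> Rabs (r - z) < g -> norm (minus (f r) (f z)) < e) ->
  ex_RInt f a b.
Proof.
  intros Hab Hc.
  set (cl := fun r => Rmax a (Rmin b r)).
  assert (Hcl : forall r, a <= cl r <= b).
  { intro r; unfold cl; split; [apply Rmax_l|]. apply Rmax_lub; [lra| apply Rmin_l]. }
  assert (Hlip : forall r z, Rabs (cl r - cl z) <= Rabs (r - z)).
  { intros r z; unfold cl, Rmax, Rmin.
    repeat (destruct Rle_dec); unfold Rabs; repeat destruct Rcase_abs; lra. }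
  apply ex_RInt_ext with (f := fun r => f (cl r)).
  { intros x Hx. rewrite Rmin_left in Hx by lra. rewrite Rmax_right in Hx by lra.
    unfold cl. rewrite Rmin_right by lra. rewrite Rmax_right by lra. reflexivity. }
  apply ex_RInt_continuous. intros z _.
  unfold continuous. refine (proj2 (@filterlim_locally_ball_norm R_AbsRing R (CompleteNormedModule.NormedModule R_AbsRing X) _ _ _ _) _). intro eps.
  destruct (Hc (cl z) (Hcl z) eps (cond_pos eps)) as [g [Hg Hg']].
  exists (mkposreal g Hg). intros y Hy. apply ball_R in Hy. simpl in Hy.
  unfold ball_norm. apply Hg'. apply Hcl. specialize (Hlip y z). lra.
Qed.

Lemma RInt_norm_le (f : R -> X) (a b M : R) : a <= b -> ex_RInt f a b ->
  (forall x, a <= x <= b -> norm (f x) <= M) -> norm (RInt f a b) <= (b - a) * M.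
Proof. intros Hab Hex H. apply norm_RInt_le_const with f; auto. now apply RInt_correct. Qed.

Lemma AL (f : R -> X) (c d L : R) : c <= d -> 0 <= L ->
 (forall z, c <= z <= d -> forall e, 0<e -> exists g, 0<g /\ forall r, c <= r <= d ->
    Rabs (r - z) < g -> norm (minus (f r) (f z)) < e) ->
 (forall z, c <= z < d -> forall e, 0<e -> exists g, 0<g /\ forall k, 0<k<g ->
    norm (minus (f (z+k)) (f z)) <= (L+e)*k) ->
 norm (minus (f d) (f c)) <= L*(d-c).
Proof.
  intros Hcd HL Hc Hd.
  assert (Main : forall e, 0 < e -> norm (minus (f d) (f c)) <= (L+e)*(d-c)).
  { intros e He.
    set (E := fun h => c <= h <= d /\ forall h', c <= h' <= h ->
                  norm (minus (f h') (f c)) <= (L+e)*(h'-c)).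
    assert (Ec : E c).
    { split; [lra|]. intros h' Hh'. replace h' with c by lra.
      rewrite nmm. lra. }
    assert (Eb : bound E) by (exists d; intros x [Hx _]; lra).
    destruct (completeness E Eb (ex_intro _ c Ec)) as [m [Hub Hlub]].
    assert (Hcm : c <= m) by (apply Hub; exact Ec).
    assert (Hmd : m <= d) by (apply Hlub; intros x [Hx _]; lra).
    assert (Em : E m).
    { split; [lra|]. intros h' Hh'.
      destruct (Rlt_or_le h' m) as [Hlt|Hge].
      - destruct (classic (exists x, E x /\ h' <= x)) as [[x [Ex Hx]]|Hn].
        + apply (proj2 Ex). lra.
        + exfalso. assert (m <= h'); [|lra]. apply Hlub. intros x Ex.
          destruct (Rle_or_lt x h'); auto. exfalso; apply Hn; exists x; split; auto; lra.
      - assert (h' = m) by lra. subst h'.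
        destruct (Req_dec m c) as [Hmc|Hmc].
        { rewrite Hmc, nmm. lra. }
        apply Rle_plus_epsilon. intros gam Hgam.
        destruct (Hc m ltac:(lra) gam Hgam) as [g [Hg Hg']].
        set (r := Rmax c (m - g/2)).
        assert (Hr1 : c <= r) by apply Rmax_l.
        assert (Hr2 : r < m) by (unfold r, Rmax; destruct Rle_dec; lra).
        assert (Hr3 : Rabs (r - m) < g) by (unfold r, Rmax; destruct Rle_dec;
                                           unfold Rabs; destruct Rcase_abs; lra).
        assert (Hrm : norm (minus (f r) (f c)) <= (L+e)*(r-c)).
        { destruct (classic (exists x, E x /\ r <= x)) as [[x [Ex Hx]]|Hn].
          + apply (proj2 Ex). lra.
          + exfalso. assert (m <= r); [|lra]. apply Hlub. intros x Ex.
            destruct (Rle_or_lt x r); auto. exfalso; apply Hn; exists x; split; auto; lra. }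
        pose proof (Hg' r ltac:(lra) Hr3) as H1.
        pose proof (nt3 (f m) (f r) (f c)). rewrite nsym in H1.
        assert ((L+e)*(r-c) <= (L+e)*(m-c)) by (apply Rmult_le_compat_l; lra).
        lra. }
    destruct (Rlt_or_le m d) as [Hlt|Hge].
    - exfalso.
      destruct (Hd m ltac:(lra) e He) as [g [Hg Hg']].
      set (k := Rmin (g/2) (d - m)).
      assert (Hk1 : 0 < k) by (unfold k, Rmin; destruct Rle_dec; lra).
      assert (Hk2 : k < g) by (unfold k, Rmin; destruct Rle_dec; lra).
      assert (Hk3 : k <= d - m) by apply Rmin_r.
      assert (E (m + k)).
      { split; [lra|]. intros h' Hh'.
        destruct (Rle_or_lt h' m) as [Hle|Hgt].
        + apply (proj2 Em). lra.
        + pose proof (Hg' (h' - m) ltac:(lra)) as H1.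
          replace (m + (h' - m)) with h' in H1 by ring.
          pose proof (nt3 (f h') (f m) (f c)).
          pose proof (proj2 Em m ltac:(lra)). nra. }
      assert (m + k <= m) by (apply Hub; auto). lra.
    - assert (m = d) by lra. subst m. apply (proj2 Em). lra. }
  apply Rle_plus_epsilon. intros eps Heps.
  pose proof (Main (eps / (d - c + 1)) ltac:(apply Rdiv_lt_0_compat; lra)) as H.
  assert (eps / (d - c + 1) * (d - c) <= eps).
  { unfold Rdiv. rewrite Rmult_assoc. rewrite <- (Rmult_1_r eps) at 2.
    apply Rmult_le_compat_l; [lra|]. apply Rle_trans with (/ (d-c+1) * (d-c+1)).
    - apply Rmult_le_compat_l; [left; apply Rinv_0_lt_compat; lra| lra].
    - rewrite Rinv_l; lra. }
  lra.
Qed.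
End Gen.

Section G2.
Context {X : CompleteNormedModule R_AbsRing}.

Lemma ntri (a b : X) : norm a <= norm (minus a b) + norm b.
Proof.
  assert (a = plus (minus a b) b) as E.
  { unfold minus. rewrite <- plus_assoc, plus_opp_l. symmetry. exact (plus_zero_r a). }
  rewrite E at 1. exact (norm_triangle _ _).
Qed.

Lemma nopp (a : X) : norm (opp a) = norm a.
Proof. exact (norm_opp a). Qed.

Lemma scal_back (k : R) (m : X) : k <> 0 -> norm m <= Rabs k * norm (scal (/k) m).
Proof.
  intro Hk.
  assert (m = scal k (scal (/k) m)) as E.
  { transitivity (scal (mult (k : R_AbsRing) (/k)) m).
    - change (mult (k:R_AbsRing) (/k)) with (k * /k). rewrite Rinv_r by exact Hk.
      symmetry. exact (scal_one m).
    - symmetry. exact (scal_assoc _ _ m). }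
  rewrite E at 1. exact (norm_scal _ _).
Qed.

Lemma norm_nonneg (a : X) : 0 <= norm a.
Proof. exact (norm_ge_0 a). Qed.

Lemma lim_eps (f : R -> X) (l : X) : filterlim f (at_right 0) (locally l) ->
  forall e, 0 < e -> exists g, 0 < g /\ forall h, 0 < h < g -> norm (minus (f h) l) < e.
Proof.
  intros H e He.
  destruct (proj1 (@filterlim_locally_ball_norm R_AbsRing R (CompleteNormedModule.NormedModule R_AbsRing X) _ _ f l) H (mkposreal e He)) as [g Hg].
  exists g. split; [apply cond_pos|]. intros h Hh.
  apply (Hg h). apply R_ball. rewrite Rminus_0_r, Rabs_right; lra. lra.
Qed.
End G2.

Section SG.
Context {X : CompleteNormedModule R_AbsRing} (A0 : X -> X) (DA0 : X -> Prop)
  (S0 : R -> X -> X) (M0 M1 : R)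
  (HS0 : C0_semigroup S0)
  (Hgen : is_generator S0 (fun x => opp (A0 x)) DA0)
  (HM0 : 0 < M0) (HM1 : 0 < M1)
  (HS0bd : forall t, 0 <= t -> op_norm_le (S0 t) M0)
  (HAS0 : forall t, 0 < t ->
     (forall x, DA0 (S0 t x)) /\ op_norm_le (fun x => A0 (S0 t x)) (M1 / t)).

Lemma SG_lin t : 0 <= t -> is_linear_op (S0 t).
Proof. intro Ht. destruct HS0 as [H _]. exact (proj1 (H t Ht)). Qed.

Lemma SG_mul t s x : 0 <= t -> 0 <= s -> S0 (t + s) x = S0 t (S0 s x).
Proof. destruct HS0 as [_ [_ [H _]]]. apply H. Qed.

Lemma SC x z : 0 <= z -> forall e, 0 < e -> exists g, 0 < g /\
  forall r, 0 <= r -> Rabs (r - z) < g -> norm (minus (S0 r x) (S0 z x)) < e.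
Proof.
  intros Hz e He.
  destruct HS0 as [_ [_ [_ Hr]]].
  destruct (lim_eps _ _ (Hr x) (e / M0) ltac:(apply Rdiv_lt_0_compat; lra)) as [g [Hg Hg']].
  exists g; split; auto. intros r Hr0 Hrz.
  destruct (Rtotal_order r z) as [Hlt|[Heq|Hgt]].
  - set (h := z - r).
    assert (Hz' : S0 z x = S0 r (S0 h x)).
    { rewrite <- SG_mul by (unfold h; lra). f_equal. unfold h; ring. }
    rewrite Hz', <- (lin_minus _ (SG_lin r Hr0)).
    eapply Rle_lt_trans. apply HS0bd; auto.
    rewrite nsym.
    assert (norm (minus (S0 h x) x) < e / M0).
    { apply Hg'. unfold h. split; [lra|]. rewrite Rabs_left in Hrz; lra. }
    apply Rmult_lt_compat_l with (r := M0) in H; [|lra].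
    unfold Rdiv in H. replace (M0 * (e * / M0)) with e in H by (field; lra). lra.
  - subst. rewrite nmm. lra.
  - set (h := r - z).
    assert (Hz' : S0 r x = S0 z (S0 h x)).
    { rewrite <- SG_mul by (unfold h; lra). f_equal. unfold h; ring. }
    rewrite Hz'.
    assert (E : minus (S0 z (S0 h x)) (S0 z x) = S0 z (minus (S0 h x) x))
      by (symmetry; apply lin_minus, SG_lin; lra).
    rewrite E.
    eapply Rle_lt_trans. apply HS0bd; auto.
    assert (norm (minus (S0 h x) x) < e / M0).
    { apply Hg'. unfold h. split; [lra|]. rewrite Rabs_right in Hrz; lra. }
    apply Rmult_lt_compat_l with (r := M0) in H; [|lra].
    unfold Rdiv in H. replace (M0 * (e * / M0)) with e in H by (field; lra). lra.
Qed.

Lemma LS d0 x c d : 0 < d0 -> d0 <= c -> c <= d ->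
  norm (minus (S0 d x) (S0 c x)) <= (M1 / d0 * norm x) * (d - c).
Proof.
  intros Hd0 Hc Hcd.
  apply (AL (fun r => S0 r x)); auto.
  - apply Rmult_le_pos; [apply Rlt_le, Rdiv_lt_0_compat; lra| apply norm_nonneg].
  - intros z Hz e He. destruct (SC x z ltac:(lra) e He) as [g [Hg Hg']].
    exists g; split; auto. intros r Hr. apply Hg'. lra.
  - intros z Hz e He.
    set (y := S0 z x).
    assert (Dy : DA0 y) by (apply (proj1 (HAS0 z ltac:(lra)))).
    pose proof (proj2 Hgen y Dy) as Hl.
    destruct (lim_eps _ _ Hl e He) as [g [Hg Hg']].
    exists g; split; auto. intros k Hk.
    assert (E : S0 (z + k) x = S0 k y).
    { unfold y. rewrite <- SG_mul by lra. f_equal. ring. }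
    rewrite E.
    pose proof (scal_back k (minus (S0 k y) y) ltac:(lra)) as H1.
    rewrite Rabs_right in H1 by lra.
    pose proof (ntri (scal (/ k) (minus (S0 k y) y)) (opp (A0 y))) as H2.
    rewrite nopp in H2.
    pose proof (Hg' k Hk) as H3.
    pose proof (proj2 (HAS0 z ltac:(lra)) x) as H4. simpl in H4. fold y in H4.
    assert (M1 / z <= M1 / d0).
    { unfold Rdiv. apply Rmult_le_compat_l; [lra|]. apply Rinv_le_contravar; lra. }
    assert (M1 / z * norm x <= M1 / d0 * norm x) by (apply Rmult_le_compat_r; auto using norm_nonneg).
    assert (norm (scal (/ k) (minus (S0 k y) y)) <= M1 / d0 * norm x + e) by lra.
    assert (k * norm (scal (/ k) (minus (S0 k y) y)) <= k * (M1 / d0 * norm x + e))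
      by (apply Rmult_le_compat_l; lra).
    lra.
Qed.
End SG.

Section FC.
Context {X : CompleteNormedModule R_AbsRing}.

Lemma FC (F : R -> X -> X) (RF : R) (HRF : 0 < RF)
  (Hlin : forall t, 0 <= t -> is_linear_op (F t))
  (Hcont : op_continuous_on_halfline F)
  (Hbd : forall t, 0 <= t -> op_norm_le (F t) RF)
  (w : R -> X) (a b B : R) : 0 <= a -> a <= b -> 0 <= B ->
  (forall r, a <= r <= b -> norm (w r) <= B) ->
  (forall z, a <= z <= b -> forall e, 0 < e -> exists g, 0 < g /\
     forall r, a <= r <= b -> Rabs (r - z) < g -> norm (minus (w r) (w z)) < e) ->
  ex_RInt (fun r => F r (w r)) a b.
Proof.
  intros Ha Hab HB Hwb Hw.
  apply ex_RInt_within; auto.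
  intros z Hz e He.
  destruct (Hcont z ltac:(lra) (e / (2 * (B + 1))) ltac:(apply Rdiv_lt_0_compat; lra)) as [g1 [Hg1 Hg1']].
  destruct (Hw z Hz (e / (2 * (RF + 1))) ltac:(apply Rdiv_lt_0_compat; lra)) as [g2 [Hg2 Hg2']].
  exists (Rmin g1 g2). split; [apply Rmin_glb_lt; auto|].
  intros r Hr Hrz.
  assert (Hr1 : Rabs (r - z) < g1) by (eapply Rlt_le_trans; [exact Hrz| apply Rmin_l]).
  assert (Hr2 : Rabs (r - z) < g2) by (eapply Rlt_le_trans; [exact Hrz| apply Rmin_r]).
  pose proof (nt3 (F r (w r)) (F z (w r)) (F z (w z))) as T1.
  pose proof (Hg1' r ltac:(lra) Hr1 (w r)) as T2. simpl in T2.
  rewrite <- (lin_minus _ (Hlin z ltac:(lra))) in T1.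
  pose proof (Hbd z ltac:(lra) (minus (w r) (w z))) as T3.
  pose proof (Hg2' r Hr Hr2) as T4.
  pose proof (Hwb r Hr) as T5.
  assert (e / (2 * (B + 1)) * norm (w r) <= e / (2 * (B + 1)) * B)
    by (apply Rmult_le_compat_l; [apply Rlt_le, Rdiv_lt_0_compat; lra| auto]).
  assert (e / (2 * (B + 1)) * B < e / 2).
  { unfold Rdiv. rewrite Rinv_mult. 
    apply Rlt_le_trans with (e * /2 * (/(B+1) * (B+1))).
    - assert (0 < e * / 2) by lra.
      assert (/ (B + 1) * B < / (B+1) * (B+1)).
      { apply Rmult_lt_compat_l; [apply Rinv_0_lt_compat; lra| lra]. }
      nra.
    - rewrite Rinv_l by lra. lra. }
  assert (RF * norm (minus (w r) (w z)) < e / 2).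
  { apply Rle_lt_trans with (RF * (e / (2 * (RF + 1)))).
    - apply Rmult_le_compat_l; lra.
    - unfold Rdiv. rewrite Rinv_mult.
      replace (RF * (e * (/2 * /(RF+1)))) with (e * /2 * (RF * /(RF+1))) by ring.
      assert (RF * / (RF+1) < 1).
      { apply Rmult_lt_reg_r with (RF + 1); [lra|].
        rewrite Rmult_assoc, Rinv_l by lra. lra. }
      assert (0 < e * / 2) by lra. nra. }
  lra.
Qed.
End FC.

Lemma pmc_g {G : AbelianGroup} (x y : G) : plus y (minus x y) = x.
Proof. transitivity (plus (minus x y) (minus y zero)).
- rewrite minus_zero_r. apply plus_comm.
- rewrite <- minus_trans. apply minus_zero_r. Qed.
Lemma mpc_g {G : AbelianGroup} (x y : G) : minus (plus x y) x = y.
Proof. assert (H := pmc_g (plus x y) x).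
transitivity (plus (opp x) (plus x (minus (plus x y) x))).
- rewrite plus_assoc, plus_opp_l, plus_zero_l. reflexivity.
- rewrite H, plus_assoc, plus_opp_l, plus_zero_l. reflexivity.
Qed.

Section Main.
Context {X : CompleteNormedModule R_AbsRing} (A0 : X -> X) (DA0 : X -> Prop)
  (S0 : R -> X -> X) (M0 M1 : R)
  (HS0 : C0_semigroup S0)
  (Hgen : is_generator S0 (fun x => opp (A0 x)) DA0)
  (HM0 : 0 < M0) (HM1 : 0 < M1)
  (HS0bd : forall t, 0 <= t -> op_norm_le (S0 t) M0)
  (HAS0 : forall t, 0 < t ->
     (forall x, DA0 (S0 t x)) /\ op_norm_le (fun x => A0 (S0 t x)) (M1 / t))
  (F : nat -> R -> X -> X) (RF : R)
  (HRF : 0 < RF)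
  (HFlin : forall n t, (1 <= n)%nat -> 0 <= t -> is_linear_op (F n t))
  (HFcont : forall n, (1 <= n)%nat -> op_continuous_on_halfline (F n))
  (HFbd : forall n t, (1 <= n)%nat -> 0 <= t -> op_norm_le (F n t) RF).

Lemma Fn_int n s u a b : (1 <= n)%nat -> 0 <= s -> s <= a -> a <= b ->
  ex_RInt (fun r => F n r (S0 (r - s) u)) a b.
Proof.
  intros Hn Hs Ha Hab.
  apply (FC (F n) RF HRF (fun t => HFlin n t Hn) (HFcont n Hn) (fun t => HFbd n t Hn) (fun r => S0 (r - s) u) a b (M0 * norm u)); try lra.
  - apply Rmult_le_pos; [lra| apply norm_nonneg].
  - intros r Hr. apply HS0bd. lra.
  - intros z Hz e He.
    destruct (SC S0 M0 HS0 HM0 HS0bd u (z - s) ltac:(lra) e He) as [g [Hg Hg']].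
    exists g; split; auto. intros r Hr Hrz. apply Hg'. lra.
    replace (r - s - (z - s)) with (r - z) by ring. exact Hrz.
Qed.

Lemma Fc_int n v a b : (1 <= n)%nat -> 0 <= a -> a <= b ->
  ex_RInt (fun r => F n r v) a b.
Proof.
  intros Hn Ha Hab.
  apply (FC (F n) RF HRF (fun t => HFlin n t Hn) (HFcont n Hn) (fun t => HFbd n t Hn) (fun _ => v) a b (norm v)); try lra.
  - apply norm_nonneg.
  - intros; lra.
  - intros z Hz e He. exists 1. split; [lra|]. intros. rewrite nmm. lra.
Qed.

Lemma pmc (x y : X) : plus y (minus x y) = x.
Proof. exact (pmc_g x y). Qed.

Lemma mpc (x y : X) : minus (plus x y) x = y.
Proof. exact (mpc_g x y). Qed.

Lemma norm_minus_le (x y : X) : norm (minus x y) <= norm x + norm y.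
Proof.
  unfold minus. eapply Rle_trans. exact (norm_triangle _ _). rewrite nopp. lra.
Qed.

Lemma piece n s u T eta rho d0 a b : (1 <= n)%nat -> 0 <= s -> 0 < d0 -> 0 <= eta ->
  norm u <= rho ->
  (forall t, 0 <= t <= T -> op_norm_le (fun x => RInt (fun r => F n r x) 0 t) eta) ->
  s + d0 <= a -> a <= b -> b <= T ->
  norm (RInt (fun r => F n r (S0 (r - s) u)) a b) <=
    2 * eta * (M0 * rho) + RF * (M1 / d0 * rho) * (b - a) * (b - a).
Proof.
  intros Hn Hs Hd0 Heta0 Hu Heta Ha Hab HbT.
  set (v := S0 (a - s) u).
  assert (Hv : norm v <= M0 * rho).
  { eapply Rle_trans. apply HS0bd. lra. apply Rmult_le_compat_l; lra. }
  assert (Hex1 : ex_RInt (fun r => F n r v) a b) by (apply (Fc_int n v); [exact Hn|lra|lra]).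
  assert (Hex2 : ex_RInt (fun r => minus (F n r (S0 (r - s) u)) (F n r v)) a b).
  { refine (@ex_RInt_minus (CompleteNormedModule.NormedModule R_AbsRing X) _ _ a b _ _); [apply (Fn_int n s u); [exact Hn|lra|lra|lra] | exact Hex1]. }
  assert (E : RInt (fun r => F n r (S0 (r - s) u)) a b =
     plus (RInt (fun r => F n r v) a b) (RInt (fun r => minus (F n r (S0 (r - s) u)) (F n r v)) a b)).
  { rewrite <- (@RInt_plus X _ _ a b Hex1 Hex2). apply RInt_ext. intros x _.
    symmetry. apply pmc. }
  rewrite E.
  eapply Rle_trans. exact (norm_triangle _ _).
  apply Rplus_le_compat.
  - assert (E2 : RInt (fun r => F n r v) a b =
       minus (RInt (fun r => F n r v) 0 b) (RInt (fun r => F n r v) 0 a)).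
    { rewrite <- (RInt_Chasles _ 0 a b) by (apply (Fc_int n v); [exact Hn|lra|lra]).
      unfold minus. rewrite plus_comm, plus_assoc, plus_opp_l, plus_zero_l. reflexivity. }
    rewrite E2. eapply Rle_trans. apply norm_minus_le.
    pose proof (Heta b ltac:(lra) v) as H1. pose proof (Heta a ltac:(lra) v) as H2.
    simpl in H1, H2.
    assert (eta * norm v <= eta * (M0 * rho)) by (apply Rmult_le_compat_l; auto).
    lra.
  - assert (Hab' : a <= b) by lra.
    eapply Rle_trans. apply (RInt_norm_le _ a b (RF * (M1 / d0 * rho * (b - a)))); auto.
    + intros x Hx.
      rewrite <- (lin_minus _ (HFlin n x Hn ltac:(lra))).
      eapply Rle_trans. apply HFbd; auto. lra.
      apply Rmult_le_compat_l; [lra|].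
      unfold v. eapply Rle_trans. apply (LS A0 DA0 S0 M0 M1 HS0 Hgen HM0 HM1 HS0bd HAS0 d0); lra.
      replace (x - s - (a - s)) with (x - a) by ring.
      apply Rle_trans with (M1 / d0 * rho * (x - a)).
      * apply Rmult_le_compat_r; [lra|]. apply Rmult_le_compat_l; auto.
        apply Rlt_le, Rdiv_lt_0_compat; lra.
      * apply Rmult_le_compat_l; [|lra]. apply Rmult_le_pos; [apply Rlt_le, Rdiv_lt_0_compat; lra|].
        apply Rle_trans with (norm u); [apply (norm_nonneg u)|exact Hu].
    + right. ring.
Qed.

Lemma nz0 : norm (zero : X) = 0.
Proof. exact norm_zero. Qed.

Lemma induct n s u T eta rho d0 h0 : (1 <= n)%nat -> 0 <= s -> 0 < d0 -> 0 <= eta ->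
  norm u <= rho ->
  (forall t, 0 <= t <= T -> op_norm_le (fun x => RInt (fun r => F n r x) 0 t) eta) ->
  0 < h0 ->
  forall k a b, s + d0 <= a -> a <= b -> b <= T -> b - a <= INR k * h0 ->
  norm (RInt (fun r => F n r (S0 (r - s) u)) a b) <=
    INR k * (2 * eta * (M0 * rho)) + RF * (M1 / d0 * rho) * h0 * (b - a).
Proof.
  intros Hn Hs Hd0 Heta0 Hu Heta Hh0.
  assert (Hrho : 0 <= rho) by (apply Rle_trans with (norm u); [apply (norm_nonneg u)|exact Hu]).
  assert (HC1 : 0 <= 2 * eta * (M0 * rho)) by (apply Rmult_le_pos; [lra| apply Rmult_le_pos; lra]).
  assert (HL : 0 <= RF * (M1 / d0 * rho)).
  { apply Rmult_le_pos; [lra| apply Rmult_le_pos; [apply Rlt_le, Rdiv_lt_0_compat; lra| lra]]. }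
  set (C1 := 2 * eta * (M0 * rho)) in *. set (Lr := RF * (M1 / d0 * rho)) in *.
  induction k as [|k IH]; intros a b Ha Hab HbT Hk.
  - simpl in Hk. assert (b = a) by lra. subst b.
    rewrite RInt_point, nz0. simpl. lra.
  - rewrite S_INR in Hk |- *.
    pose proof (pos_INR k) as Hkp.
    destruct (Rle_or_lt (b - a) h0) as [Hle|Hgt].
    + pose proof (piece n s u T eta rho d0 a b Hn Hs Hd0 Heta0 Hu Heta Ha Hab HbT) as P.
      fold C1 Lr in P.
      assert (Lr * (b - a) * (b - a) <= Lr * h0 * (b - a)).
      { apply Rmult_le_compat_r; [lra|]. apply Rmult_le_compat_l; lra. }
      assert (C1 <= (INR k + 1) * C1) by nra.
      lra.
    + set (c := a + h0).
      rewrite <- (@RInt_Chasles X _ a c b) by (apply (Fn_int n s u); [exact Hn|lra|unfold c; lra|unfold c; lra]).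
      eapply Rle_trans. exact (norm_triangle _ _).
      pose proof (piece n s u T eta rho d0 a c Hn Hs Hd0 Heta0 Hu Heta Ha ltac:(unfold c; lra) ltac:(unfold c; lra)) as P.
      fold C1 Lr in P.
      pose proof (IH c b ltac:(unfold c; lra) ltac:(unfold c; lra) HbT ltac:(unfold c; lra)) as Q.
      replace (c - a) with h0 in P by (unfold c; ring).
      replace (b - a) with (h0 + (b - c)) by (unfold c; ring).
      lra.
Qed.

Lemma ptb n s u r : (1 <= n)%nat -> 0 <= s -> s <= r ->
  norm (F n r (S0 (r - s) u)) <= RF * (M0 * norm u).
Proof.
  intros Hn Hs Hr. eapply Rle_trans. apply HFbd; auto; lra.
  apply Rmult_le_compat_l; [lra|]. apply HS0bd. lra.
Qed.

Lemma main_sec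
  (HFint : forall T, 0 < T -> forall eps, 0 < eps -> exists N, forall n,
     (N <= n)%nat -> forall t, 0 <= t <= T ->
       op_norm_le (fun x => RInt (fun r => F n r x) 0 t) eps) :
  forall T, 0 < T -> forall rho, 0 < rho -> forall eps, 0 < eps ->
    exists N, forall n, (N <= n)%nat ->
      forall (u : X), norm u <= rho ->
      forall t s, 0 <= t <= T -> 0 <= s <= t ->
        norm (RInt (fun r => F n r (S0 (r - s) u)) s t) <= eps.
Proof.
  intros T HT rho Hrho eps Heps.
  set (K := RF * (M0 * rho) + 1).
  assert (HK0 : 0 <= RF * (M0 * rho)) by (apply Rmult_le_pos; [lra| apply Rmult_le_pos; lra]).
  set (d0 := eps / (3 * K)).
  assert (Hd0 : 0 < d0) by (unfold d0, K; apply Rdiv_lt_0_compat; lra).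
  assert (Hd0K : d0 * K = eps / 3) by (unfold d0, K; field; lra).
  set (Lr := RF * (M1 / d0 * rho)).
  assert (HL : 0 <= Lr).
  { apply Rmult_le_pos; [lra| apply Rmult_le_pos; [apply Rlt_le, Rdiv_lt_0_compat; lra| lra]]. }
  assert (HLT : 0 <= Lr * T) by (apply Rmult_le_pos; lra).
  set (h0 := eps / (3 * (Lr * T + 1))).
  assert (Hh0 : 0 < h0) by (unfold h0; apply Rdiv_lt_0_compat; lra).
  assert (Hh0e : h0 * (Lr * T + 1) = eps / 3) by (unfold h0; field; lra).
  destruct (INR_unbounded (T / h0)) as [m Hm].
  assert (HmT : T <= INR m * h0).
  { apply Rlt_le. apply Rmult_lt_reg_r with (/ h0); [apply Rinv_0_lt_compat; lra|].
    rewrite Rmult_assoc, Rinv_r, Rmult_1_r by lra. exact Hm. }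
  pose proof (pos_INR m) as Hm0.
  set (Q := INR m * (2 * (M0 * rho))).
  assert (HQ : 0 <= Q) by (apply Rmult_le_pos; [lra| apply Rmult_le_pos; [lra| apply Rmult_le_pos; lra]]).
  set (eta := eps / (3 * (Q + 1))).
  assert (Heta : 0 < eta) by (unfold eta; apply Rdiv_lt_0_compat; lra).
  assert (HetaQ : eta * (Q + 1) = eps / 3) by (unfold eta; field; lra).
  destruct (HFint T HT eta Heta) as [N HN].
  exists (Nat.max N 1). intros n Hn u Hu t s Ht Hs.
  assert (Hn1 : (1 <= n)%nat) by (eapply Nat.le_trans; [apply Nat.le_max_r| exact Hn]).
  assert (HnN : (N <= n)%nat) by (eapply Nat.le_trans; [apply Nat.le_max_l| exact Hn]).
  assert (Hpt : forall r, s <= r -> norm (F n r (S0 (r - s) u)) <= RF * (M0 * rho)).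
  { intros r Hr. eapply Rle_trans. apply ptb; auto; lra.
    apply Rmult_le_compat_l; [lra|]. apply Rmult_le_compat_l; lra. }
  assert (Hfirst : forall b, s <= b -> b <= s + d0 ->
     norm (RInt (fun r => F n r (S0 (r - s) u)) s b) <= eps / 3).
  { intros b Hb1 Hb2.
    eapply Rle_trans. apply (RInt_norm_le _ s b (RF * (M0 * rho))); auto.
    apply (Fn_int n s u); [exact Hn1|lra|lra|lra].
    intros x Hx. apply Hpt. lra.
    rewrite <- Hd0K. unfold K.
    apply Rle_trans with (d0 * (RF * (M0 * rho))).
    - apply Rmult_le_compat_r; lra.
    - apply Rmult_le_compat_l; lra. }
  destruct (Rle_or_lt t (s + d0)) as [Hle|Hgt].
  - apply Rle_trans with (eps / 3); [apply Hfirst; lra| lra].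
  - rewrite <- (@RInt_Chasles X _ s (s + d0) t) by (apply (Fn_int n s u); [exact Hn1|lra|lra|lra]).
    eapply Rle_trans. exact (norm_triangle _ _).
    pose proof (Hfirst (s + d0) ltac:(lra) ltac:(lra)) as P1.
    pose proof (induct n s u T eta rho d0 h0 Hn1 ltac:(lra) Hd0 ltac:(lra) Hu (HN n HnN) Hh0
                  m (s + d0) t ltac:(lra) ltac:(lra) ltac:(lra) ltac:(lra)) as P2.
    fold Lr in P2.
    assert (INR m * (2 * eta * (M0 * rho)) <= eps / 3).
    { rewrite <- HetaQ. unfold Q. nra. }
    assert (Lr * h0 * (t - (s + d0)) <= eps / 3).
    { rewrite <- Hh0e.
      apply Rle_trans with (Lr * h0 * T).
      - apply Rmult_le_compat_l; [apply Rmult_le_pos; lra| lra].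
      - nra. }
    lra.
Qed.
End Main.
Theorem lemma3p3
  (X : CompleteNormedModule R_AbsRing)
  (A0 : X -> X) (DA0 : X -> Prop) (S0 : R -> X -> X) (M0 M1 : R)
  (* -A0 generates the (bounded analytic) C_0-semigroup S0 *)
  (HS0 : C0_semigroup S0)
  (Hgen : is_generator S0 (fun x => opp (A0 x)) DA0)
  (HM0 : 0 < M0) (HM1 : 0 < M1)
  (HS0bd : forall t, 0 <= t -> op_norm_le (S0 t) M0)
  (HAS0 : forall t, 0 < t ->
     (forall x, DA0 (S0 t x)) /\ op_norm_le (fun x => A0 (S0 t x)) (M1 / t))
  (* the sequence F_n *)
  (F : nat -> R -> X -> X) (RF : R)
  (HRF : 0 < RF)
  (HFlin : forall n t, (1 <= n)%nat -> 0 <= t -> is_linear_op (F n t))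
  (HFcont : forall n, (1 <= n)%nat -> op_continuous_on_halfline (F n))
  (HFbd : forall n t, (1 <= n)%nat -> 0 <= t -> op_norm_le (F n t) RF)
  (HFint : forall T, 0 < T -> forall eps, 0 < eps -> exists N, forall n,
     (N <= n)%nat -> forall t, 0 <= t <= T ->
       op_norm_le (fun x => RInt (fun r => F n r x) 0 t) eps) :
  forall T, 0 < T -> forall rho, 0 < rho -> forall eps, 0 < eps ->
    exists N, forall n, (N <= n)%nat ->
      forall (u : X), norm u <= rho ->
      forall t s, 0 <= t <= T -> 0 <= s <= t ->
        norm (RInt (fun r => F n r (S0 (r - s) u)) s t) <= eps.
Proof. exact (@main_sec X A0 DA0 S0 M0 M1 HS0 Hgen HM0 HM1 HS0bd HAS0 F RF HRF HFlin HFcont HFbd HFint). Qed.
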